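(* Let $n\ge 1$ be an integer, $X\sim \mathrm{Bino}(n,p)$ with $p\in[0,1]$, and fix $\alpha\in[0,1]$. Let $T_p:\{0,1,\dots,n\}\times[0,1]\to\mathbb{R}$ be a test statistic satisfying $$T_p(x,p_0)=T_p(n-x,1-p_0)\quad\text{for all } x\in\{0,\dots,n\},\ p_0\in[0,1].$$ Define $$h_p(x,p_0)=\sum_{\{y\in\{0,\dots,n\}:\,T_p(y,p_0)\le T_p(x,p_0)\}} p_B(y,n,p_0),$$ and $C_p(x)=\overline{\{p_0\in[0,1]: h_p(x,p_0)>\alpha\}}$, written $C_p(x)=[L_p(x),U_p(x)]$. Then $$U_p(x)=1-L_p(n-x)\quad\text{for all } x\in\{0,\dots,n\}.$$
   Context: $p_B(y,n,p)=\binom{n}{y}p^y(1-p)^{n-y}$ denotes the binomial probability mass function. For a set $A\subseteq\mathbb{R}$, $\overline{A}$ denotes the smallest closed simply connected set (i.e. closed interval) containing $A$. A small value of $T_p(x,p_0)$ is regarded as evidence against $H_0:p=p_0$; $C_p$ is the resulting confidence interval for $p$ of nominal level $1-\alpha$. *)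

(* Defs.v *)
From HB Require Import structures.
From mathcomp Require Import all_boot all_order all_algebra.
From mathcomp Require Import all_classical all_reals.
Set Implicit Arguments. Unset Strict Implicit. Unset Printing Implicit Defensive.
Import Order.TTheory GRing.Theory Num.Theory.
Local Open Scope ring_scope.
Local Open Scope classical_set_scope.

Definition pB {R : realType} (y n : nat) (p : R) : R :=
  ('C(n, y))%:R * p ^+ y * (1 - p) ^+ (n - y).

Definition hp {R : realType} (n : nat) (T : nat -> R -> R) (x : nat) (p0 : R) : R :=
  \sum_(y < n.+1 | T y p0 <= T x p0) pB y n p0.

(* smallest closed interval containing A: intersection of all closed
   intervals [a,b] (possibly empty, a > b) containing A *)
Definition interval_hull {R : realType} (A : set R) : set R :=
  [set t | forall a b : R, A `<=` `[a, b] -> `[a, b] t].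

Definition Cp {R : realType} (n : nat) (T : nat -> R -> R) (alpha : R) (x : nat)
  : set R :=
  interval_hull [set p0 | 0 <= p0 <= 1 /\ hp n T x p0 > alpha].

(* Main.v *)
Require Import Defs.
From HB Require Import structures.
From mathcomp Require Import all_boot all_order all_algebra.
From mathcomp Require Import all_classical all_reals.
From mathcomp Require Import lra.
Import Order.TTheory GRing.Theory Num.Theory.
Local Open Scope ring_scope.
Local Open Scope classical_set_scope.
Lemma itvE (R : realType) (a b t : R) : `[a, b] t <-> a <= t <= b.
Proof. by rewrite /= in_itv. Qed.
Lemma hull_refl (R : realType) (A : set R) t :
  interval_hull [set s | A (1 - s)] t <-> interval_hull A (1 - t).
Proof.
split => H a b Hs; apply/itvE.
- have /itvE : `[1 - b, 1 - a] t.
    apply: H => s /Hs /itvE; rewrite /= => ?; apply/itvE; lra.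
  move=> ?; lra.
- have /itvE : `[1 - b, 1 - a] (1 - t).
    apply: H => s As; apply/itvE.
    have /Hs /itvE : [set s | A (1 - s)] (1 - s) by rewrite /= (_ : 1 - (1 - s) = s) //; lra.
    move=> ?; lra.
  move=> ?; lra.
Qed.
Lemma hp_refl (R : realType) n (T : nat -> R -> R)
  (hT : forall (x : nat) (p0 : R), (x <= n)%N -> 0 <= p0 <= 1 ->
          T x p0 = T (n - x)%N (1 - p0)) x p0 :
  (x <= n)%N -> 0 <= p0 <= 1 -> hp n T (n - x) (1 - p0) = hp n T x p0.
Proof.
move=> hx hp0; rewrite /hp (reindex_inj rev_ord_inj) /=.
apply: eq_big => [y|y _]; rewrite subSS.
- have hy : (y <= n)%N by rewrite -ltnS.
  by rewrite -(hT _ _ hy hp0) -(hT _ _ hx hp0).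
- have hy : (y <= n)%N by rewrite -ltnS.
  by rewrite /pB bin_sub // subKn // (_ : 1 - (1 - p0) = p0) ; [by rewrite mulrAC|lra].
Qed.

Theorem proposition1 (R : realType) (n : nat) (p alpha : R)
  (T : nat -> R -> R)
  (hn : (1 <= n)%N) (hp01 : 0 <= p <= 1) (halpha : 0 <= alpha <= 1)
  (hT : forall (x : nat) (p0 : R), (x <= n)%N -> 0 <= p0 <= 1 ->
          T x p0 = T (n - x)%N (1 - p0)) :
  forall (x : nat), (x <= n)%N ->
  forall L1 U1 L2 U2 : R,
    L1 <= U1 -> Cp n T alpha x = `[L1, U1] ->
    Cp n T alpha (n - x)%N = `[L2, U2] ->
    U1 = 1 - L2.
Proof.
move=> x hx L1 U1 L2 U2 hLU E1 E2.
have key : forall t, Cp n T alpha (n - x)%N t <-> Cp n T alpha x (1 - t).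
  move=> t; rewrite /Cp -hull_refl.
  suff -> : [set p0 | 0 <= p0 <= 1 /\ alpha < hp n T (n - x) p0] =
    [set s | [set p0 | 0 <= p0 <= 1 /\ alpha < hp n T x p0] (1 - s)] by [].
  apply/seteqP; split => s /= [hs1 hs2].
  - have hs : 0 <= s <= 1 by [].
    split; first lra.
    by have := @hp_refl R n T hT (n - x)%N s (leq_subr x n) hs; rewrite subKn // => ->.
  - have hs : 0 <= s <= 1 by lra.
    split => //.
    by have := @hp_refl R n T hT (n - x)%N s (leq_subr x n) hs; rewrite subKn // => <-.
have K : forall t, L2 <= t <= U2 <-> L1 <= 1 - t <= U1.
  move=> t; split.
  - move=> h; have : `[L2, U2] t by apply/itvE.
    by rewrite -E2 => /key; rewrite E1 => /itvE.
  - move=> h; have : `[L1, U1] (1 - t) by apply/itvE.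
    by rewrite -E1 => /key; rewrite E2 => /itvE.
have h1 : L2 <= 1 - U1 <= U2 by apply/K; rewrite (_ : 1 - (1 - U1) = U1); [lra|lra].
have h2 : L1 <= 1 - L2 <= U1 by apply/K; lra.
lra.
Qed.
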